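(* (a) Let $u:\mathbb{Z}^k\to\mathbb{C}$ satisfy, for all $1\le i\le k-1$ and all $\vec n\in\mathbb{Z}^k$ with $n_i=n_{i+1}$, the backward two-body boundary condition $\big((\nabla^{\mathrm{bwd}}_i-q\nabla^{\mathrm{bwd}}_{i+1})u\big)(\vec n)=0$. Then for every $\vec n\in\mathbb{W}^k$, $(1-q)\sum_{i=1}^k(\nabla^{\mathrm{bwd}}_iu)(\vec n)=(\mathcal{H}^{\mathrm{bwd}}u)(\vec n)$ (with $\mathcal{H}^{\mathrm{bwd}}$ applied to the restriction of $u$ to $\mathbb{W}^k$). (b) Let $u:\mathbb{Z}^k\to\mathbb{C}$ satisfy, for all $1\le i\le k-1$ and all $\vec n\in\mathbb{Z}^k$ with $n_i=n_{i+1}$, the forward two-body boundary condition $\big((q\nabla^{\mathrm{fwd}}_i-\nabla^{\mathrm{fwd}}_{i+1})u\big)(\vec n)=0$. Then for every $\vec n\in\mathbb{W}^k$, $(1-q)\sum_{i=1}^k(\nabla^{\mathrm{fwd}}_iu)(\vec n)=(\mathcal{H}^{\mathrm{cfwd}}u)(\vec n)$.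
   Context: Fix $q\in(0,1)$ and an integer $k\ge1$. Let $\mathbb{W}^k=\{\vec n\in\mathbb{Z}^k: n_1\ge\cdots\ge n_k\}$; $\vec n_i^{\pm}=(n_1,\dots,n_i\pm1,\dots,n_k)$. For $\vec n\in\mathbb{W}^k$ write $n_1=\cdots=n_{c_1}>n_{c_1+1}=\cdots=n_{c_1+c_2}>\cdots$, with $M=M(\vec n)$ clusters of sizes $(c_1,\dots,c_M)$. For $u:\mathbb{Z}^k\to\mathbb{C}$, $(\nabla^{\mathrm{bwd}}_iu)(\vec n)=u(\vec n_i^-)-u(\vec n)$ and $(\nabla^{\mathrm{fwd}}_iu)(\vec n)=u(\vec n_i^+)-u(\vec n)$. The $q$-Boson backward generator is $(\mathcal{H}^{\mathrm{bwd}}f)(\vec n)=\sum_{i=1}^{M}(1-q^{c_i})\big(f(\vec n^{-}_{c_1+\cdots+c_i})-f(\vec n)\big)$ and the conjugated forward generator is $(\mathcal{H}^{\mathrm{cfwd}}f)(\vec n)=\sum_{i=1}^{M}(1-q^{c_i})\big(f(\vec n^{+}_{c_1+\cdots+c_{i-1}+1})-f(\vec n)\big)$ (with index $1$ when $i=1$), for $f:\mathbb{W}^k\to\mathbb{C}$. *)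

(* Defs.v *)
From HB Require Import structures.
From mathcomp Require Import all_boot all_order all_algebra.
Set Implicit Arguments. Unset Strict Implicit. Unset Printing Implicit Defensive.
Import Order.TTheory GRing.Theory Num.Theory.
Local Open Scope ring_scope.

(* Vectors n in Z^k are functions 'I_k -> int; coordinate i (1-based in the
   paper) is the ordinal i-1 (0-based here). *)

Definition inW (k : nat) (n : 'I_k -> int) : Prop :=
  forall i j : 'I_k, (i <= j)%N -> n j <= n i.

Definition shift (k : nat) (n : 'I_k -> int) (m : nat) (d : int) : 'I_k -> int :=
  fun j => if val j == m then n j + d else n j.

Definition grad_bwd (R : nzRingType) (k : nat) (m : nat) (u : ('I_k -> int) -> R)
  (n : 'I_k -> int) : R := u (shift n m (-1)) - u n.
Definition grad_fwd (R : nzRingType) (k : nat) (m : nat) (u : ('I_k -> int) -> R)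
  (n : 'I_k -> int) : R := u (shift n m 1) - u n.

Fixpoint rle_aux (x : int) (c : nat) (s : seq int) : seq nat :=
  match s with
  | [::] => [:: c]
  | y :: t => if y == x then rle_aux x c.+1 t else c :: rle_aux y 1 t
  end.
Definition rle (s : seq int) : seq nat :=
  if s is x :: t then rle_aux x 1 t else [::].

Definition clusters (k : nat) (n : 'I_k -> int) : seq nat :=
  rle [seq n i | i <- enum 'I_k].

(* q-Boson backward generator:
   sum_{i=1}^M (1 - q^{c_i}) (f(n^-_{c_1+...+c_i}) - f(n));
   the 1-based index c_1+...+c_i is the 0-based index (c_1+...+c_i) - 1. *)
Definition H_bwd (R : nzRingType) (q : R) (k : nat) (f : ('I_k -> int) -> R)
  (n : 'I_k -> int) : R :=
  let cs := clusters n in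
  \sum_(i < size cs)
    (1 - q ^+ nth 0%N cs i) *
    (f (shift n ((\sum_(j < i.+1) nth 0%N cs j).-1)%N (-1)) - f n).

(* conjugated forward generator:
   sum_{i=1}^M (1 - q^{c_i}) (f(n^+_{c_1+...+c_{i-1}+1}) - f(n));
   the 1-based index c_1+...+c_{i-1}+1 is the 0-based index c_1+...+c_{i-1}. *)
Definition H_cfwd (R : nzRingType) (q : R) (k : nat) (f : ('I_k -> int) -> R)
  (n : 'I_k -> int) : R :=
  let cs := clusters n in
  \sum_(i < size cs)
    (1 - q ^+ nth 0%N cs i) *
    (f (shift n (\sum_(j < i) nth 0%N cs j)%N 1) - f n).

(* Main.v *)
Require Import Defs.
From HB Require Import structures.
From mathcomp Require Import all_boot all_order all_algebra.
From mathcomp Require Import ring zify.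
Import Order.TTheory GRing.Theory Num.Theory.
Local Open Scope ring_scope.

Section Aux.
Variable R : comNzRingType.
Variable q : R.

Definition Fb (h : nat -> R) (cs : seq nat) : R :=
  \sum_(i < size cs) (1 - q ^+ nth 0%N cs i) * h ((\sum_(j < i.+1) nth 0%N cs j).-1)%N.
Definition Ff (h : nat -> R) (cs : seq nat) : R :=
  \sum_(i < size cs) (1 - q ^+ nth 0%N cs i) * h (\sum_(j < i) nth 0%N cs j)%N.

Lemma Fb_nil h : Fb h [::] = 0.
Proof. by rewrite /Fb big_ord0. Qed.
Lemma Ff_nil h : Ff h [::] = 0.
Proof. by rewrite /Ff big_ord0. Qed.

Lemma Fb_cons h c cs :
  Fb h (c :: cs) = (1 - q ^+ c) * h c.-1 + Fb (fun m => h (c + m)%N) cs.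
Proof.
rewrite /Fb /= big_ord_recl /= big_ord_recl big_ord0 /= addn0; congr (_ + _).
apply: eq_bigr => i _ /=.
rewrite big_ord_recl /=.
have [->|nz] := eqVneq (nth 0%N cs i) 0%N; first by rewrite expr0 subrr !mul0r.
congr (_ * h _).
have : (0 < \sum_(j < i.+1) nth 0%N cs j)%N.
  rewrite big_ord_recr /= addn_gt0; apply/orP; right; by rewrite lt0n.
rewrite -[bump 0 i]/(i.+1).
under [X in (c + X).-1]eq_bigr => j _ do rewrite add0n.
set S := \sum_(j < i.+1) nth 0%N cs j. lia.
Qed.

Lemma Ff_cons h c cs :
  Ff h (c :: cs) = (1 - q ^+ c) * h 0%N + Ff (fun m => h (c + m)%N) cs.
Proof.
rewrite /Ff /= big_ord_recl /= big_ord0; congr (_ + _).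
apply: eq_bigr => i _ /=.
rewrite big_ord_recl /=.
by under eq_bigr => j _ do rewrite add0n.
Qed.

Lemma block_b (h : nat -> R) c :
  (forall j, (j.+1 < c)%N -> h j = q * h j.+1) ->
  (1 - q) * \sum_(j < c) h j = (1 - q ^+ c) * h c.-1.
Proof.
elim: c => [|c IH] H; first by rewrite big_ord0 expr0 subrr !mul0r mulr0.
case: c IH H => [|d] IH H.
  by rewrite big_ord_recl big_ord0 expr1 addr0.
rewrite big_ord_recr /= mulrDr IH; last by move=> j hj; apply: H; apply: ltnW.
rewrite /= (H d) //.
rewrite !exprS; ring.
Qed.

Lemma block_f (h : nat -> R) c :
  (forall j, (j.+1 < c)%N -> q * h j = h j.+1) ->
  (1 - q) * \sum_(j < c) h j = (1 - q ^+ c) * h 0%N.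
Proof.
elim: c h => [|c IH] h H; first by rewrite big_ord0 expr0 subrr !mul0r mulr0.
rewrite big_ord_recl /= mulrDr.
rewrite (IH (fun m => h m.+1)); last by move=> j hj; apply: H.
case: c IH H => [|c] IH H; first by rewrite expr0 subrr mul0r addr0 expr1.
rewrite -(H 0%N) //.
rewrite !exprS; ring.
Qed.

Lemma rle_b (t : seq int) : forall x c (h : nat -> R),
  (forall j, (j.+1 < c + size t)%N ->
     nth 0 (nseq c x ++ t) j = nth 0 (nseq c x ++ t) j.+1 -> h j = q * h j.+1) ->
  (1 - q) * \sum_(j < c + size t) h j = Fb h (rle_aux x c t).
Proof.
elim: t => [|y t IH] x c h H.
  rewrite /= Fb_cons Fb_nil addr0 addn0; apply: block_b => j hj.
  apply: H; first by rewrite addn0.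
  by rewrite cats0 !nth_nseq hj (ltnW hj).
rewrite /=; case: ifP => [/eqP Eyx|ne]; first subst y.
  have E : nseq c x ++ x :: t = nseq c.+1 x ++ t by elim: c {H} => //= c ->.
  rewrite /= addnS -addSn; apply: IH => j hj; rewrite -E; apply: H.
  by rewrite /= addnS -addSn.
rewrite Fb_cons big_split_ord /= mulrDr.
congr (_ + _).
  apply: block_b => j hj; apply: H; first by rewrite /=; lia.
  by rewrite !nth_cat size_nseq hj (ltnW hj) !nth_nseq hj (ltnW hj).
have := IH y 1%N (fun m => h (c + m)%N); rewrite add1n /= => ->//.
move=> j hj e; rewrite addnS; apply: H; first by rewrite /=; lia.
rewrite !nth_cat size_nseq.
have -> : (c + j < c)%N = false by lia.
have -> : ((c + j).+1 < c)%N = false by lia.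
by rewrite -addnS !addKn.
Qed.

Lemma rle_f (t : seq int) : forall x c (h : nat -> R),
  (forall j, (j.+1 < c + size t)%N ->
     nth 0 (nseq c x ++ t) j = nth 0 (nseq c x ++ t) j.+1 -> q * h j = h j.+1) ->
  (1 - q) * \sum_(j < c + size t) h j = Ff h (rle_aux x c t).
Proof.
elim: t => [|y t IH] x c h H.
  rewrite /= Ff_cons Ff_nil addr0 addn0; apply: block_f => j hj.
  apply: H; first by rewrite addn0.
  by rewrite cats0 !nth_nseq hj (ltnW hj).
rewrite /=; case: ifP => [/eqP Eyx|ne]; first subst y.
  have E : nseq c x ++ x :: t = nseq c.+1 x ++ t by elim: c {H} => //= c ->.
  rewrite /= addnS -addSn; apply: IH => j hj; rewrite -E; apply: H.
  by rewrite /= addnS -addSn.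
rewrite Ff_cons big_split_ord /= mulrDr.
congr (_ + _).
  apply: block_f => j hj; apply: H; first by rewrite /=; lia.
  by rewrite !nth_cat size_nseq hj (ltnW hj) !nth_nseq hj (ltnW hj).
have := IH y 1%N (fun m => h (c + m)%N); rewrite add1n /= => ->//.
move=> j hj e; rewrite addnS; apply: H; first by rewrite /=; lia.
rewrite !nth_cat size_nseq.
have -> : (c + j < c)%N = false by lia.
have -> : ((c + j).+1 < c)%N = false by lia.
by rewrite -addnS !addKn.
Qed.

Lemma rle_gen_b (s : seq int) (h : nat -> R) :
  (forall j, (j.+1 < size s)%N -> nth 0 s j = nth 0 s j.+1 -> h j = q * h j.+1) ->
  (1 - q) * \sum_(j < size s) h j = Fb h (rle s).
Proof.
case: s => [|x t] H; first by rewrite big_ord0 mulr0 /rle Fb_nil.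
by have := @rle_b t x 1%N h H; rewrite add1n.
Qed.

Lemma rle_gen_f (s : seq int) (h : nat -> R) :
  (forall j, (j.+1 < size s)%N -> nth 0 s j = nth 0 s j.+1 -> q * h j = h j.+1) ->
  (1 - q) * \sum_(j < size s) h j = Ff h (rle s).
Proof.
case: s => [|x t] H; first by rewrite big_ord0 mulr0 /rle Ff_nil.
by have := @rle_f t x 1%N h H; rewrite add1n.
Qed.

End Aux.

Lemma nth_clust k (n : 'I_k -> int) j (hj : (j < k)%N) :
  nth 0 [seq n i | i <- enum 'I_k] j = n (Ordinal hj).
Proof.
rewrite (nth_map (Ordinal hj)) ?size_enum_ord //; congr n; apply: val_inj.
by rewrite /= nth_enum_ord.
Qed.

Theorem proposition2p5 (C : numClosedFieldType) (q : C) (hq0 : 0 < q) (hq1 : q < 1)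
  (k : nat) (hk : (1 <= k)%N) :
  (forall u : ('I_k -> int) -> C,
     (forall (i j : 'I_k) (n : 'I_k -> int), val j = (val i).+1 -> n i = n j ->
        grad_bwd (val i) u n - q * grad_bwd (val j) u n = 0) ->
     forall n : 'I_k -> int, inW n ->
       (1 - q) * \sum_(i < k) grad_bwd i u n = H_bwd q u n)
  /\
  (forall u : ('I_k -> int) -> C,
     (forall (i j : 'I_k) (n : 'I_k -> int), val j = (val i).+1 -> n i = n j ->
        q * grad_fwd (val i) u n - grad_fwd (val j) u n = 0) ->
     forall n : 'I_k -> int, inW n ->
       (1 - q) * \sum_(i < k) grad_fwd i u n = H_cfwd q u n).
Proof.
have Hs : forall n : 'I_k -> int, size [seq n i | i <- enum 'I_k] = k.
  by move=> n; rewrite size_map size_enum_ord.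
split=> u Hu n _.
  have := @rle_gen_b C q [seq n i | i <- enum 'I_k] (fun m => grad_bwd m u n).
  rewrite Hs => ->; first by [].
  move=> j hj; rewrite ?size_map ?size_enum_ord in hj; have hj' : (j < k)%N by apply: ltnW.
  rewrite (@nth_clust k n j hj') (@nth_clust k n j.+1 hj) => e.
  apply/eqP; rewrite -subr_eq0; apply/eqP.
  exact: (Hu (Ordinal hj') (Ordinal hj) n erefl e).
have := @rle_gen_f C q [seq n i | i <- enum 'I_k] (fun m => grad_fwd m u n).
rewrite Hs => ->; first by [].
move=> j hj; rewrite ?size_map ?size_enum_ord in hj; have hj' : (j < k)%N by apply: ltnW.
rewrite (@nth_clust k n j hj') (@nth_clust k n j.+1 hj) => e.
apply/eqP; rewrite -subr_eq0; apply/eqP.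
exact: (Hu (Ordinal hj') (Ordinal hj) n erefl e).
Qed.
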